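(* Let $p\in[1,\infty)$, $w$ a weight sequence, and let $A\subset L_{p,w}$ be bounded in $\|\cdot\|_{p,w}$ and equinormed with respect to $\{\|\cdot\|_{p,w,i}\}_{i\in\mathbb{N}}$. Then $$\forall\varepsilon>0\ \exists N\in\mathbb{N}\ \forall a\in A\ \forall i\ge N:\ \|(a_{i+1},a_{i+2},\dots)\|_{p,w}^p<\varepsilon.$$
   Context: A weight sequence is a sequence $w=(w_i)$ of positive reals with $w_1=1\ge w_2\ge\dots$, $w_i\to0$, and $\sum_i w_i=+\infty$. For a real sequence $a$, $\|a\|_{p,w}=\sup_{\sigma}\big(\sum_{i=1}^\infty |a_{\sigma_i}|^p w_i\big)^{1/p}$ over all permutations $\sigma$ of $\mathbb{N}$; $L_{p,w}$ is the set of real sequences with finite norm. $\|a\|_{p,w,i}=\|(a_1,\dots,a_i,0,0,\dots)\|_{p,w}$. $A$ is equinormed if $\forall\varepsilon>0\ \exists i\ \forall a\in A:\ \|a\|_{p,w}\le\|a\|_{p,w,i}+\varepsilon$. *)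

(* Defs.v *)
(* MathComp + MathComp-Analysis, R : realType.
   Sequences are indexed from 0: the paper's a_1, a_2, ... is a 0, a 1, ... *)
From mathcomp Require Import all_boot all_order all_algebra.
From mathcomp Require Import all_classical all_reals all_analysis.
Set Implicit Arguments. Unset Strict Implicit. Unset Printing Implicit Defensive.
Import Order.TTheory GRing.Theory Num.Theory.
Local Open Scope classical_set_scope.
Local Open Scope ring_scope.

Section Lorentz.
Context {R : realType}.

Definition weight_seq (w : nat -> R) : Prop :=
  [/\ w 0%N = 1,
      (forall i, 0 < w i),
      (forall i, w i.+1 <= w i),
      w @ \oo --> 0
    & (\sum_(0 <= i <oo) (w i)%:E = +oo)%E].

Definition lpw_normp (p : R) (w : nat -> R) (a : nat -> R) : \bar R :=
  ereal_sup [set (\sum_(0 <= i <oo) ((`|a (s i)| `^ p * w i)%:E))%E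
            | s in [set s : nat -> nat | bijective s]].

Definition lpw_norm (p : R) (w : nat -> R) (a : nat -> R) : \bar R :=
  (lpw_normp p w a `^ p^-1)%E.

Definition Lpw (p : R) (w : nat -> R) : set (nat -> R) :=
  [set a | (lpw_norm p w a < +oo)%E].

Definition trunc (i : nat) (a : nat -> R) : nat -> R :=
  fun k => if (k < i)%N then a k else 0.

Definition lpw_norm_i (p : R) (w : nat -> R) (i : nat) (a : nat -> R) : \bar R :=
  lpw_norm p w (trunc i a).

Definition tail (i : nat) (a : nat -> R) : nat -> R := fun k => a (k + i)%N.

Definition lpw_bounded (p : R) (w : nat -> R) (A : set (nat -> R)) : Prop :=
  exists M : R, forall a, A a -> (lpw_norm p w a <= M%:E)%E.

Definition equinormed (p : R) (w : nat -> R) (A : set (nat -> R)) : Prop :=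
  forall eps : R, 0 < eps -> exists i : nat, forall a, A a ->
    (lpw_norm p w a <= lpw_norm_i p w i a + eps%:E)%E.

End Lorentz.

(* Main.v *)
Require Import Defs.
From mathcomp Require Import all_boot all_order all_algebra.
From mathcomp Require Import all_classical all_reals all_analysis.
From mathcomp Require Import ring lra.
Import Order.TTheory GRing.Theory Num.Theory.
Local Open Scope classical_set_scope.
Local Open Scope ring_scope.

Definition nswap (a b : nat) (x : nat) : nat :=
  if x == a then b else if x == b then a else x.

Lemma nswap_inv a b : involutive (nswap a b).
Proof.
move=> x; rewrite /nswap.
have [->|xa] := eqVneq x a.
  by case: eqP => [->|_] //; rewrite eqxx.
have [->|xb] := eqVneq x b; first by rewrite eqxx.
by rewrite (negbTE xa) (negbTE xb).
Qed.

Lemma nswap_bij a b : bijective (nswap a b).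
Proof. exact: inv_bij (nswap_inv a b). Qed.

Lemma ext_bij (u : nat -> nat) n : injective u ->
  exists v, bijective v /\ forall k, (k < n)%N -> v k = u k.
Proof.
move=> iu; elim: n => [|n [v [bv hv]]].
  by exists id; split => //; exists id.
exists (nswap (v n) (u n) \o v); split.
  exact: bij_comp (nswap_bij _ _) bv.
move=> k; rewrite ltnS leq_eqVlt => /orP [/eqP ->|kn] /=.
  by rewrite /nswap eqxx.
rewrite /nswap hv //.
have -> : (u k == v n) = false.
  apply/negbTE/eqP => e; rewrite -hv // in e.
  have /(bij_inj bv) := e; move=> kn'; by rewrite kn' ltnn in kn.
have -> : (u k == u n) = false.
  apply/negbTE/eqP => /iu e; by rewrite e ltnn in kn.
by [].
Qed.

Lemma count_inj_lt (t : nat -> nat) n i : injective t ->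
  (count (fun k => t k < i) (iota 0 n) <= i)%N.
Proof.
move=> it.
rewrite -size_filter.
rewrite -(size_map t) -[X in (_ <= X)%N](size_iota 0 i).
apply: uniq_leq_size.
  rewrite map_inj_uniq //; apply: filter_uniq; exact: iota_uniq.
move=> y /mapP [k]; rewrite mem_filter => /andP [tki _] ->.
by rewrite mem_iota add0n.
Qed.

Section S.
Context {R : realType} (p : R) (w : nat -> R).
Hypothesis hp : 0 < p.
Hypothesis hw : forall k, 0 < w k.

Definition tf (a : nat -> R) (s : nat -> nat) k : \bar R :=
  ((`|a (s k)| `^ p * w k)%:E).
Definition Ssum (a : nat -> R) (s : nat -> nat) : \bar R :=
  (\sum_(0 <= k <oo) tf a s k)%E.

Lemma term_ge0 (a : nat -> R) (s : nat -> nat) k :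
  (0 <= tf a s k)%E.
Proof. by rewrite lee_fin mulr_ge0 ?powR_ge0 // ltW. Qed.

Lemma Ssum_ge0 a s : (0 <= Ssum a s)%E.
Proof. by apply: nneseries_ge0 => n _ _; apply: term_ge0. Qed.

Lemma normp_ub a s : bijective s -> (Ssum a s <= lpw_normp p w a)%E.
Proof. by move=> bs; apply: ereal_sup_ubound; exists s. Qed.

Lemma normp_lub a (X : \bar R) :
  (forall s, bijective s -> (Ssum a s <= X)%E) -> (lpw_normp p w a <= X)%E.
Proof. by move=> h; apply: ge_ereal_sup => _ [s bs <-]; apply: h. Qed.

Lemma normp_ge0 a : (0 <= lpw_normp p w a)%E.
Proof.
apply: (le_trans (Ssum_ge0 a id)); apply: normp_ub; by exists id.
Qed.

Lemma inj_ub a u : injective u -> (Ssum a u <= lpw_normp p w a)%E.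
Proof.
move=> iu; rewrite /Ssum.
apply: lime_le; first by apply: is_cvg_nneseries => n _ _; apply: term_ge0.
apply: nearW => n.
have [v [bv hv]] := ext_bij u n iu.
apply: (le_trans _ (normp_ub a v bv)).
apply: (le_trans _ (nneseries_lim_ge n (fun k _ _ => term_ge0 a v k))).
rewrite le_eqVlt; apply/orP; left; apply/eqP.
apply: eq_big_nat => k /andP [_ kn]; by rewrite /tf hv.
Qed.

Lemma normp_mono a b : (forall k, `|b k| <= `|a k|) ->
  (lpw_normp p w b <= lpw_normp p w a)%E.
Proof.
move=> h; apply: normp_lub => s bs; apply: (le_trans _ (normp_ub a s bs)).
apply: lee_nneseries => [k _ _|k _]; first exact: term_ge0.
rewrite /tf lee_fin; apply: ler_wpM2r; first exact: ltW.
by apply: (ge0_ler_powR (ltW hp)); rewrite ?nnegrE.  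
Qed.

Lemma pow_trunc i (a : nat -> R) k :
  `|trunc i a k| `^ p = if (k < i)%N then `|a k| `^ p else 0.
Proof. by rewrite /trunc; case: ifP => _ //; rewrite normr0 powR0 // gt_eqF. Qed.

Lemma trunc_le i (a : nat -> R) k : `|trunc i a k| <= `|a k|.
Proof. by rewrite /trunc; case: ifP => _ //; rewrite normr0. Qed.

End S.

Lemma pow_incr {R : realType} (p M Y e : R) : 1 <= p -> 0 <= Y -> Y <= M ->
  0 <= e -> e <= 1 ->
  (Y + e) `^ p <= Y `^ p + p * (M + 1) `^ (p - 1) * e.
Proof.
move=> p1 Y0 YM e0 e1.
have p0 : 0 < p by apply: lt_le_trans p1.
have M0 : 0 <= M by apply: le_trans YM.
have K1 : 1 <= p * (M + 1) `^ (p - 1).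
  have h1 : 1 <= (M + 1) `^ (p - 1).
    have := @ler_powR R (M + 1) _ 0 (p - 1); rewrite powRr0; apply.
      by rewrite lerDr.
    by rewrite subr_ge0.
  nra.
have [->|e0'] := eqVneq e 0; first by rewrite addr0 mulr0 addr0.
have ep : 0 < e by rewrite lt_neqAle eq_sym e0' e0.
have [->|Y0'] := eqVneq Y 0.
  rewrite add0r powR0 ?gt_eqF // add0r.
  apply: (le_trans (ge1r_powR _ p1)); first by rewrite ep e1.
  by rewrite -{1}[e]mul1r ler_wpM2r.
have Yp : 0 < Y by rewrite lt_neqAle eq_sym Y0' Y0.
have Ylt : Y < Y + e by rewrite ltrDl.
have hd : forall x, x \in `]Y, Y + e[ -> is_derive x 1 (@powR R ^~ p) (p * x `^ (p - 1)).
  move=> x; rewrite in_itv /= => /andP [Yx _]; apply: is_derive1_powR.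
  exact: lt_trans Yx.
have hcont : {in `[Y, Y + e], forall x, derivable (@powR R ^~ p) x 1}.
  move=> x; rewrite in_itv /= => /andP [Yx _].
  apply: derivable_powR; rewrite in_itv /= andbT.
  exact: lt_le_trans Yx.
have [c cI hc] := MVT Ylt hd (derivable_within_continuous hcont).
move: cI; rewrite in_itv /= => /andP [Yc ce].
have c0 : 0 <= c by apply: ltW; apply: lt_trans Yc.
have hpc : c `^ (p - 1) <= (M + 1) `^ (p - 1).
  apply: (ge0_ler_powR (r := p - 1)); rewrite ?subr_ge0 ?nnegrE //.
    by apply: addr_ge0.
  apply: (le_trans (ltW ce)); by rewrite lerD.
move: hc; rewrite addrAC subrr add0r => hc.
rewrite -lerBlDl hc.
rewrite ler_wpM2r // ler_wpM2l //; exact: ltW.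
Qed.

Section Core.
Context {R : realType} (p : R) (w : nat -> R) (A : set (nat -> R)).
Hypothesis p1 : 1 <= p.
Hypothesis hw : forall k, 0 < w k.
Hypothesis hwd : forall k, w k.+1 <= w k.
Hypothesis hw0 : w 0%N = 1.
Hypothesis hdiv : (\sum_(0 <= i <oo) (w i)%:E = +oo)%E.
Hypothesis hfin : forall a, A a -> lpw_normp p w a \is a fin_num.
Hypothesis hB : exists B, forall a, A a -> (lpw_normp p w a <= B%:E)%E.
Hypothesis hEQ : forall d, 0 < d -> exists i, forall a, A a ->
  (lpw_normp p w a <= lpw_normp p w (trunc i a) + d%:E)%E.

Let hp : 0 < p. Proof. exact: lt_le_trans p1. Qed.

Lemma w_anti m n : (m <= n)%N -> w n <= w m.
Proof.
move=> mn; rewrite -(subnK mn); elim: (n - m)%N => [|k IH] /=.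
  by rewrite add0n.
by rewrite addSn; apply: le_trans (hwd _) IH.
Qed.

Lemma w_le1 k : w k <= 1.
Proof. by rewrite -hw0; apply: w_anti. Qed.

Lemma Wbig X : exists n, X < \sum_(0 <= k < n) w k.
Proof.
apply/not_existsP => h.
have : (\sum_(0 <= i <oo) (w i)%:E <= X%:E)%E.
  apply: lime_le; first by apply: is_cvg_nneseries => n _ _; rewrite lee_fin ltW.
  apply: nearW => n; rewrite sumEFin lee_fin.
  by rewrite leNgt; apply/negP; exact: h n.
by rewrite hdiv leNgt ltry.
Qed.

Lemma fin_trunc a i : A a -> lpw_normp p w (trunc i a) \is a fin_num.
Proof.
move=> Aa; rewrite ge0_fin_numE; last exact: (normp_ge0 p w hw).
apply: (le_lt_trans (normp_mono p w hp hw _ _ (trunc_le i a))).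
by rewrite -ge0_fin_numE ?hfin //; exact: (normp_ge0 p w hw).
Qed.

Lemma approx (x : nat -> R) (d : R) : 0 < d -> lpw_normp p w x \is a fin_num ->
  exists t, bijective t /\ ((fine (lpw_normp p w x) - d)%:E < Ssum p w x t)%E.
Proof.
move=> d0 fx.
have : ((fine (lpw_normp p w x) - d)%:E < lpw_normp p w x)%E.
  by rewrite -[X in (_ < X)%E](fineK fx) lte_fin gtrDl oppr_lt0.
move/ereal_sup_gt => [_ [t bt <-] h]; by exists t.
Qed.

Lemma ind_series (q : nat) (c : R) : 0 <= c ->
  (\sum_(0 <= m <oo) (if m == q then c else 0)%:E = c%:E)%E.
Proof.
move=> c0.
rewrite (@nneseriesD1 _ (fun m => (if m == q then c else 0)%:E) q xpredT) //; last first.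
  by move=> k _; case: ifP => _; rewrite lee_fin.
rewrite eqxx eseries0 ?adde0 // => m _ /= mq.
by rewrite (negbTE mq).
Qed.

Lemma entries d : 0 < d -> exists N, forall a, A a -> forall k, (N <= k)%N ->
  `|a k| `^ p < d.
Proof.
move=> d0.
have [B hB'] := hB.
have [n0 hn0] := Wbig (2 * B / d).
have wn0 := hw n0.
pose δ := d * w n0 / 8.
have δ0 : 0 < δ by rewrite /δ divr_gt0 // mulr_gt0.
have [i hi] := hEQ _ δ0.
exists i => a Aa k ik.
rewrite ltNge; apply/negP => dk.
pose x := trunc i a.
have fx : lpw_normp p w x \is a fin_num := fin_trunc a i Aa.
have [t [bt ht]] := approx _ _ δ0 fx.
pose Nx := fine (lpw_normp p w x).
have eNx : lpw_normp p w x = Nx%:E by rewrite fineK.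
have fa := hfin _ Aa.
pose Na := fine (lpw_normp p w a).
have eNa : lpw_normp p w a = Na%:E by rewrite fineK.
have hia := hi a Aa; rewrite -/x eNa eNx -EFinD lee_fin in hia.
have NaB : Na <= B by rewrite -lee_fin -eNa; apply: hB'.
have NxNa : Nx <= Na.
  by have := normp_mono p w hp hw _ _ (trunc_le i a); rewrite -/x eNa eNx lee_fin.
have fT : Ssum p w x t \is a fin_num.
  rewrite ge0_fin_numE; last exact: (Ssum_ge0 p w hw).
  apply: (le_lt_trans (normp_ub p w x t bt)); by rewrite eNx ltry.
pose T := fine (Ssum p w x t).
have eT : Ssum p w x t = T%:E by rewrite fineK.
have TNx : T <= Nx by rewrite -lee_fin -eT -eNx; apply: normp_ub.
rewrite -/Nx eT lte_fin in ht.
have [g tg gt] := bt.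
pose r := g k.
have tr : t r = k by rewrite /r gt.
have x0 : forall m, (i <= m)%N -> `|x m| `^ p = 0.
  by move=> m im; rewrite /x pow_trunc // ltnNge im.
pose P := fun m => `|x (t m)| `^ p < d / 2.
have exP : exists m, P m by exists r; rewrite /P tr x0 // divr_gt0.
case: (ex_minnP exP) => q Pq qmin.
have hsum : \sum_(0 <= m < q) (d / 2 * w m) <= T.
  rewrite -lee_fin -sumEFin -eT.
  apply: le_trans (nneseries_lim_ge q (fun m _ _ => term_ge0 p w hw x t m)).
  rewrite big_nat_cond [X in (_ <= X)%E]big_nat_cond.
  apply: lee_sum => m /andP [/andP [_ mq] _]; rewrite /tf lee_fin.
  apply: ler_wpM2r; first exact: ltW.
  by rewrite leNgt; apply/negP => /qmin; rewrite leqNgt mq.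
have qn0 : (q < n0)%N.
  rewrite ltnNge; apply/negP => n0q.
  have : \sum_(0 <= m < n0) w m <= \sum_(0 <= m < q) w m.
    rewrite [X in _ <= X](big_cat_nat (n:=n0)) //= lerDl.
    by apply: sumr_ge0 => m _; apply: ltW.
  have : d / 2 * \sum_(0 <= m < q) w m <= B.
    rewrite mulr_sumr; apply: (le_trans hsum); apply: (le_trans TNx).
    exact: (le_trans NxNa NaB).
  move: hn0; rewrite ltr_pdivrMr // => hn0 h1 h2.
  have h4 := ler_wpM2l (ltW d0) h2.
  lra.
have wq : w n0 <= w q by apply: w_anti; apply: ltnW.
pose u := t \o nswap q r.
have bu : bijective u := bij_comp bt (nswap_bij q r).
have hu : (Ssum p w a u <= Na%:E)%E by rewrite -eNa; apply: normp_ub.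
have c0 : 0 <= d / 2 * w q by rewrite mulr_ge0 ?divr_ge0 ?ltW.
have hge : (T%:E + (d / 2 * w q)%:E <= Ssum p w a u)%E.
  rewrite -eT -(ind_series q (d / 2 * w q)) //.
  rewrite /Ssum -nneseriesD; last 2 first.
  - by move=> m _ _; exact: (term_ge0 p w hw).
  - by move=> m _ _; case: ifP => _; rewrite lee_fin.
  apply: (@lee_nneseries R (fun m => tf p w x t m + (if m == q then d / 2 * w q else 0)%:E) (tf p w a u)).
    move=> m _ _; apply: adde_ge0; first exact: (term_ge0 p w hw).
    by case: ifP => _; rewrite lee_fin.
  move=> m _; rewrite /tf /u /= /nswap.
  have [->|mq] := eqVneq m q.
    rewrite tr -EFinD lee_fin.
    rewrite -mulrDl; apply: ler_wpM2r; first exact: ltW.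
    rewrite /P in Pq; lra.
  have [->|mr] := eqVneq m r.
    rewrite tr x0 // -EFinD lee_fin mul0r addr0.
    by rewrite mulr_ge0 ?powR_ge0 // ltW.
  rewrite -EFinD lee_fin addr0.
  apply: ler_wpM2r; first exact: ltW.
  by apply: (ge0_ler_powR (ltW hp)); rewrite ?nnegrE //; apply: trunc_le.
have := le_trans hge hu; rewrite -EFinD lee_fin => h3.
have h4 := ler_wpM2l (ltW d0) wq.
have h5 : 0 < d * w q := mulr_gt0 d0 (hw q).
rewrite /δ in ht hia; lra.
Qed.

End Core.

Section Core.
Context {R : realType} (p : R) (w : nat -> R) (A : set (nat -> R)).
Hypothesis p1 : 1 <= p.
Hypothesis hw : forall k, 0 < w k.
Hypothesis hwd : forall k, w k.+1 <= w k.
Hypothesis hw0 : w 0%N = 1.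
Hypothesis hdiv : (\sum_(0 <= i <oo) (w i)%:E = +oo)%E.
Hypothesis hfin : forall a, A a -> lpw_normp p w a \is a fin_num.
Hypothesis hB : exists B, forall a, A a -> (lpw_normp p w a <= B%:E)%E.
Hypothesis hEQ : forall d, 0 < d -> exists i, forall a, A a ->
  (lpw_normp p w a <= lpw_normp p w (trunc i a) + d%:E)%E.

Let hp : 0 < p. Proof. exact: lt_le_trans p1. Qed.

Lemma tail_small δ : 0 < δ -> exists N, forall a, A a -> forall j, (N <= j)%N ->
  (lpw_normp p w (tail j a) <= (3 * δ)%:E)%E.
Proof.
move=> δ0.
have [i hi] := hEQ _ δ0.
pose d := δ / (i%:R + 1).
have i10 : 0 < (i%:R + 1 : R) by rewrite ltr_wpDl.
have d0 : 0 < d by rewrite /d divr_gt0.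
have id : i%:R * d <= δ.
  rewrite /d mulrA ler_pdivrMr //; lra.
have [N2 hN2] := entries p w A p1 hw hwd hdiv hfin hB hEQ _ d0.
exists (maxn i N2) => a Aa j; rewrite geq_max => /andP [ij N2j].
pose x := trunc i a.
have fx : lpw_normp p w x \is a fin_num := fin_trunc p w A p1 hw hfin a i Aa.
have [t [bt ht]] := approx p w _ _ δ0 fx.
pose Nx := fine (lpw_normp p w x).
have eNx : lpw_normp p w x = Nx%:E by rewrite fineK.
have fa := hfin _ Aa.
pose Na := fine (lpw_normp p w a).
have eNa : lpw_normp p w a = Na%:E by rewrite fineK.
have hia := hi a Aa; rewrite -/x eNa eNx -EFinD lee_fin in hia.
have fT : Ssum p w x t \is a fin_num.
  rewrite ge0_fin_numE; last exact: (Ssum_ge0 p w hw).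
  apply: (le_lt_trans (normp_ub p w x t bt)); by rewrite eNx ltry.
pose T := fine (Ssum p w x t).
have eT : Ssum p w x t = T%:E by rewrite fineK.
rewrite -/Nx eT lte_fin in ht.
apply: normp_lub => s bs.
pose u m := if (t m < i)%N then t m else (s m + j)%N.
have iu : injective u.
  move=> m1 m2; rewrite /u; case: ifP => h1; case: ifP => h2 e.
  - exact: (bij_inj bt e).
  - have : (t m1 < j)%N by apply: leq_trans h1 ij.
    by rewrite e ltnNge leq_addl.
  - have : (t m2 < j)%N by apply: leq_trans h2 ij.
    by rewrite -e ltnNge leq_addl.
  - by apply: (bij_inj bs); move/eqP: e; rewrite eqn_add2r => /eqP.
have hu : (Ssum p w a u <= Na%:E)%E by rewrite -eNa; apply: inj_ub.
pose G m := (if (t m < i)%N then `|a (s m + j)%N| `^ p * w m else 0)%:E.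
have G0 : forall m, (0 <= G m)%E.
  by move=> m; rewrite /G lee_fin; case: ifP => _ //; rewrite mulr_ge0 ?powR_ge0 // ltW.
have hid : (Ssum p w x t + Ssum p w (tail j a) s =
            Ssum p w a u + \sum_(0 <= m <oo) G m)%E.
  rewrite /Ssum -nneseriesD; last 2 first.
  - by move=> m _ _; exact: (term_ge0 p w hw).
  - by move=> m _ _; exact: (term_ge0 p w hw).
  rewrite -nneseriesD; last 2 first.
  - by move=> m _ _; exact: (term_ge0 p w hw).
  - by move=> m _ _; exact: G0.
  apply: eq_eseriesr => m _.
  rewrite /tf /G /u /x /tail pow_trunc //.
  by case: ifP => _; rewrite -!EFinD ?mul0r ?add0r ?addr0.
have hG : (\sum_(0 <= m <oo) G m <= (i%:R * d)%:E)%E.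
  apply: lime_le; first by apply: is_cvg_nneseries => m _ _; exact: G0.
  apply: nearW => n; rewrite /G sumEFin lee_fin.
  apply: (@le_trans _ _ (\sum_(0 <= m < n) (if (t m < i)%N then d else 0))).
    apply: ler_sum => m _; case: ifP => _ //.
    rewrite -[d]mulr1; apply: ler_pM.
    - exact: powR_ge0.
    - exact: ltW (hw m).
    - by apply: ltW; apply: hN2 => //; apply: leq_trans N2j (leq_addl _ _).
    - exact: (w_le1 w hwd hw0).
  rewrite -big_mkcond big_const_seq iter_addr_0 -[X in X <= _]mulr_natr.
  rewrite [X in _ <= X]mulrC ler_pM2l // ler_nat /index_iota subn0.
  apply: count_inj_lt; exact: bij_inj.
have := leeD hu hG; rewrite -hid.
rewrite eT -lee_suber_addl // -EFinD => h.
apply: (le_trans h); rewrite lee_fin.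
lra.
Qed.

End Core.

Lemma epowpow {R : realType} (p : R) (x : \bar R) : 0 < p -> (0 <= x)%E ->
  ((x `^ p^-1) `^ p)%E = x.
Proof. by move=> hp x0; rewrite -poweRrM mulVf ?gt_eqF // poweRe1. Qed.

Lemma rpowpow {R : realType} (p : R) (x : R) : 0 < p -> 0 <= x ->
  (x `^ p^-1) `^ p = x.
Proof. by move=> hp x0; rewrite -powRrM mulVf ?gt_eqF // powRr1. Qed.

Theorem mainTheorem13 (R : realType) (p : R) (w : nat -> R) (A : set (nat -> R)) :
  1 <= p -> weight_seq w -> A `<=` Lpw p w ->
  lpw_bounded p w A -> equinormed p w A ->
  forall eps : R, 0 < eps -> exists N : nat, forall a, A a -> forall i : nat,
    (N <= i)%N -> (lpw_norm p w (tail i a) `^ p < eps%:E)%E.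
Proof.
move=> p1 [hw0 hw hwd _ hdiv] hA [M hM] heq eps e0.
have hp : 0 < p by apply: lt_le_trans p1.
have hfin : forall a, A a -> lpw_normp p w a \is a fin_num.
  move=> a Aa; move: (hA a Aa); rewrite /Lpw /lpw_norm /=.
  have := normp_ge0 p w hw a.
  case: (lpw_normp p w a) => [r | |] //= _.
  by rewrite invr_eq0 gt_eqF.
pose M' := Num.max M 0.
have M'0 : 0 <= M' by rewrite le_max lexx orbT.
have hnu : forall a, A a -> fine (lpw_normp p w a) `^ p^-1 <= M'.
  move=> a Aa; have := hM a Aa; rewrite /lpw_norm -(fineK (hfin a Aa)) poweR_EFin.
  by rewrite lee_fin => h; apply: (le_trans h); rewrite le_max lexx.
have hB : exists B, forall a, A a -> (lpw_normp p w a <= B%:E)%E.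
  exists (M' `^ p) => a Aa.
  rewrite -(fineK (hfin a Aa)) lee_fin.
  have Na0 : 0 <= fine (lpw_normp p w a).
    by rewrite -lee_fin fineK ?hfin //; exact: (normp_ge0 p w hw).
  rewrite -{1}(rpowpow _ _ hp Na0).
  by apply: (ge0_ler_powR (ltW hp)); rewrite ?nnegrE ?powR_ge0 // hnu.
have hEQ : forall d, 0 < d -> exists i, forall a, A a ->
    (lpw_normp p w a <= lpw_normp p w (trunc i a) + d%:E)%E.
  move=> d d0.
  pose K := p * (M' + 1) `^ (p - 1).
  have K0 : 0 < K by rewrite /K mulr_gt0 // powR_gt0 // ltr_wpDl.
  pose η := Num.min 1 (d / K).
  have η0 : 0 < η by rewrite /η lt_min ltr01 divr_gt0.
  have η1 : η <= 1 by rewrite /η ge_min lexx.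
  have ηd : K * η <= d.
    have : η <= d / K by rewrite /η ge_min lexx orbT.
    move=> h; apply: (le_trans (ler_wpM2l (ltW K0) h)).
    by rewrite mulrCA divff ?gt_eqF // mulr1.
  have [i hi] := heq η η0.
  exists i => a Aa.
  have fx := fin_trunc p w A p1 hw hfin a i Aa.
  have [Na eNa] : exists Na : R, lpw_normp p w a = Na%:E.
    by exists (fine (lpw_normp p w a)); rewrite fineK ?hfin.
  have [Nx eNx] : exists Nx : R, lpw_normp p w (trunc i a) = Nx%:E.
    by exists (fine (lpw_normp p w (trunc i a))); rewrite fineK.
  have h : Na `^ p^-1 <= Nx `^ p^-1 + η.
    have := hi a Aa; rewrite /lpw_norm_i /lpw_norm eNa eNx !poweR_EFin -EFinD lee_fin; exact.
  rewrite eNa eNx -EFinD lee_fin.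
  have Na0 : 0 <= Na by rewrite -lee_fin -eNa; exact: (normp_ge0 p w hw).
  have Nx0 : 0 <= Nx by rewrite -lee_fin -eNx; exact: (normp_ge0 p w hw).
  have NxNa : Nx <= Na.
    rewrite -lee_fin -eNa -eNx.
    exact: (normp_mono p w hp hw _ _ (trunc_le i a)).
  have pi0 : 0 <= p^-1 by rewrite invr_ge0 ltW.
  have nuxa : Nx `^ p^-1 <= Na `^ p^-1.
    by have := @ge0_ler_powR R p^-1 pi0 Nx Na; apply; rewrite ?nnegrE.
  have nux : Nx `^ p^-1 <= M'.
    by apply: (le_trans nuxa); have := hnu a Aa; rewrite eNa.
  rewrite -{1}(rpowpow _ _ hp Na0).
  apply: (le_trans (y := (Nx `^ p^-1 + η) `^ p)).
    apply: (ge0_ler_powR (ltW hp)); rewrite ?nnegrE ?powR_ge0 //.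
    by rewrite addr_ge0 ?powR_ge0 // ltW.
  apply: (le_trans (pow_incr _ _ _ _ p1 (powR_ge0 _ _) nux (ltW η0) η1)).
  by rewrite rpowpow // lerD2l -/K.
have e4 : 0 < eps / 4 by rewrite divr_gt0.
have [N hN] := tail_small p w A p1 hw hwd hw0 hdiv hfin hB hEQ (eps / 4) e4.
exists N => a Aa i iN.
rewrite epowpow //; last exact: (normp_ge0 p w hw).
apply: (le_lt_trans (hN a Aa i iN)); rewrite lte_fin; lra.
Qed.
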